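(* Let $Z$ be an $n\times k$ matrix and $\varepsilon\in\mathbb R^n$ such that $Z'D_\varepsilon^2Z$ is invertible, and set $V=Z(Z'D_\varepsilon^2Z)^{-1}Z'$ and $P=D_\varepsilon VD_\varepsilon$. Then for every $i=1,\dots,n$, $$V_{ii}-3V_{ii}P_{ii}+4V_{ii}P_{ii}^2-2\sum_{j=1}^nV_{ij}^2\varepsilon_j^2P_{ij}^2\;\ge\;V_{ii}(1-P_{ii})(1-2P_{ii})^2.$$
   Context: $D_\varepsilon$ is the diagonal matrix with diagonal $\varepsilon$ and $D_\varepsilon^2=D_\varepsilon D_\varepsilon$; $V_{ij}$ and $P_{ij}$ denote entries of $V$ and $P$. *)

(* Defs.v *)
From mathcomp Require Import all_boot all_order all_algebra.
Set Implicit Arguments. Unset Strict Implicit. Unset Printing Implicit Defensive.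
Import Order.TTheory GRing.Theory Num.Theory.
Local Open Scope ring_scope.

Definition Deps (R : pzRingType) (n : nat) (eps : 'I_n -> R) : 'M[R]_n :=
  diag_mx (\row_j eps j).

(* Main.v *)
Require Import Defs.
From mathcomp Require Import all_boot all_order all_algebra.
From mathcomp Require Import ring lra.
Import Order.TTheory GRing.Theory Num.Theory.
Local Open Scope ring_scope.

Lemma sum_sq_le (R : realFieldType) (I : Type) (r : seq I) (F : I -> R) :
  (forall j, 0 <= F j) ->
  \sum_(j <- r) F j ^+ 2 <= (\sum_(j <- r) F j) ^+ 2.
Proof.
move=> H; elim: r => [|x r IH]; first by rewrite !big_nil expr0n.
rewrite !big_cons.
have hS : 0 <= \sum_(j <- r) F j by apply: sumr_ge0.
have := H x; nra.
Qed.

Theorem mainTheorem11 (R : realFieldType) (n k : nat)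
  (Z : 'M[R]_(n, k)) (eps : 'I_n -> R)
  (hinv : Z^T *m (Deps eps *m Deps eps) *m Z \in unitmx) :
  let V := Z *m invmx (Z^T *m (Deps eps *m Deps eps) *m Z) *m Z^T in
  let P := Deps eps *m V *m Deps eps in
  forall i : 'I_n,
    V i i - 3 * V i i * P i i + 4 * V i i * P i i ^+ 2
      - 2 * \sum_(j < n) V i j ^+ 2 * eps j ^+ 2 * P i j ^+ 2
    >= V i i * (1 - P i i) * (1 - 2 * P i i) ^+ 2.
Proof.
move=> V P i.
set D := Deps eps in V P hinv *.
set M := Z^T *m (D *m D) *m Z in V P hinv *.
have DT : D^T = D by rewrite /D /Deps tr_diag_mx.
have MT : M^T = M by rewrite /M !trmx_mul DT trmxK mulmxA.
have VT : V^T = V by rewrite /V !trmx_mul trmxK trmx_inv MT mulmxA.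
have Vs : forall a b, V a b = V b a by move=> a b; rewrite -{1}VT mxE.
have PP : P *m P = P.
  rewrite /P /V !mulmxA.
  have -> : D *m Z *m invmx M *m Z^T *m D *m D *m Z *m invmx M *m Z^T *m D
    = D *m Z *m (invmx M *m M) *m invmx M *m Z^T *m D.
    by rewrite /M !mulmxA.
  by rewrite mulVmx // mulmx1.
have Pab : forall a b, P a b = eps a * V a b * eps b.
  move=> a b; rewrite /P /D /Deps mul_mx_diag mul_diag_mx !mxE.
  by [].
have Pij : forall j, P i j = eps i * V i j * eps j by move=> j; exact: Pab.
have Psym : forall j, P j i = P i j.
  by move=> j; rewrite !Pab Vs; ring.
have hsum : \sum_(j < n) P i j ^+ 2 = P i i.
  rewrite -{2}PP mxE; apply: eq_bigr => j _; by rewrite Psym expr2.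
set p := P i i in hsum *.
have [e0|enz] := eqVneq (eps i) 0.
  have P0 : forall j, P i j = 0 by move=> j; rewrite Pij e0 !mul0r.
  rewrite big1; last by move=> j _; rewrite P0 expr0n /= mulr0.
  have -> : p = 0 by rewrite /p P0.
  have -> : (1 - 2 * 0 : R) ^+ 2 = 1 by rewrite mulr0 subr0 expr1n.
  by rewrite !mulr0 !subr0 !mulr1 expr0n mulr0 addr0.
set T := \sum_(j < n | j != i) P i j ^+ 4.
have hq : \sum_(j < n) P i j ^+ 4 = p ^+ 4 + T by rewrite (bigD1 i).
have hS : \sum_(j < n | j != i) P i j ^+ 2 = p - p ^+ 2.
  move: hsum; rewrite (bigD1 i) //= => h; by rewrite -{1}h addrC addrK.
have hT : T <= (p - p ^+ 2) ^+ 2.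
  rewrite -hS /T big_mkcond [X in _ <= X ^+ 2]big_mkcond /=.
  have -> : \sum_(j < n) (if j != i then P i j ^+ 4 else 0)
     = \sum_(j < n) (if j != i then P i j ^+ 2 else 0) ^+ 2.
    by apply: eq_bigr => j _; case: ifP => _; rewrite ?expr0n // -exprM.
  apply: sum_sq_le => j; case: ifP => _ //; exact: sqr_ge0.
set e := eps i ^+ 2.
have epos : 0 < e by rewrite /e exprn_even_gt0 //=.
have E1 : e * V i i = p by rewrite /p Pij /e; ring.
have E2 : e * (\sum_(j < n) V i j ^+ 2 * eps j ^+ 2 * P i j ^+ 2)
   = \sum_(j < n) P i j ^+ 4.
  rewrite mulr_sumr; apply: eq_bigr => j _.
  rewrite /e Pij; ring.
rewrite hq in E2.
rewrite -(ler_pM2l epos).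
set v := V i i in E1 *.
set s := \sum_(j < n) _ in E2 *.
have -> : e * (v - 3 * v * p + 4 * v * p ^+ 2 - 2 * s)
  = (e * v) - 3 * (e * v) * p + 4 * (e * v) * p ^+ 2 - 2 * (e * s) by ring.
have -> : e * (v * (1 - p) * (1 - 2 * p) ^+ 2)
  = (e * v) * (1 - p) * (1 - 2 * p) ^+ 2 by ring.
rewrite E1 E2.
nra.
Qed.
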